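(* Let $n\geq 2$ and let $c_0:V(K_n)\to\mathbb{Z}$ be any initial chip configuration on the complete graph $K_n$. Then the sequence of configurations $(c_t)_{t\ge0}$ produced by the diffusion process is eventually periodic, i.e. there exist $t\geq 0$ and $p\geq 1$ with $c_{t+p}=c_t$.
   Context: Diffusion process: for a finite simple graph $G$ and a chip configuration $c_t:V(G)\to\mathbb{Z}$ (negative values allowed), the next configuration is defined simultaneously for every vertex $u$ by $c_{t+1}(u)=c_t(u)-|\{w\in N(u): c_t(u)>c_t(w)\}|+|\{w\in N(u): c_t(u)<c_t(w)\}|$. *)

(* Defs.v *)
From mathcomp Require Import all_boot all_order all_algebra.
Set Implicit Arguments. Unset Strict Implicit. Unset Printing Implicit Defensive.
Import Order.TTheory GRing.Theory Num.Theory.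
Local Open Scope ring_scope.

Definition simple_graph (T : finType) (e : rel T) : Prop :=
  symmetric e /\ irreflexive e.

Definition complete_graph (n : nat) : rel 'I_n := fun u w => u != w.

Definition diffusion_step (T : finType) (e : rel T) (c : T -> int) : T -> int :=
  fun u => c u - (#|[pred w | e u w && (c w < c u)]| : int)
               + (#|[pred w | e u w && (c u < c w)]| : int).

Definition diffusion (T : finType) (e : rel T) (c0 : T -> int) (t : nat) : T -> int :=
  iter t (diffusion_step e) c0.

(* Main.v *)
Require Import Defs.
From mathcomp Require Import all_boot all_order all_algebra.
From mathcomp Require Import zify lra.
Import Order.TTheory GRing.Theory Num.Theory.
Set Implicit Arguments. Unset Strict Implicit.
Local Open Scope ring_scope.

Definition Lc n (c : 'I_n -> int) u := #|[pred w | complete_graph u w && (c w < c u)]|.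
Definition Gc n (c : 'I_n -> int) u := #|[pred w | complete_graph u w && (c u < c w)]|.

Lemma stepE n (c : 'I_n -> int) u :
  diffusion_step (@complete_graph n) c u = c u - (Lc c u)%:Z + (Gc c u)%:Z.
Proof. by []. Qed.

Lemma card_sum n (P : 'I_n -> bool) : #|[pred w | P w]| = (\sum_w (P w : nat))%N.
Proof.
rewrite -sum1_card big_mkcond /=. apply: eq_bigr => i _; rewrite inE; by case: (P i).
Qed.

Lemma sumLG n (c : 'I_n -> int) : (\sum_u Lc c u = \sum_u Gc c u)%N.
Proof.
rewrite /Lc /Gc.
under eq_bigr => u _ do rewrite card_sum.
under [RHS]eq_bigr => u _ do rewrite card_sum.
rewrite exchange_big /=; apply: eq_bigr => u _; apply: eq_bigr => w _.
by rewrite /complete_graph eq_sym.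
Qed.

Lemma sum_step n (c : 'I_n -> int) :
  \sum_u diffusion_step (@complete_graph n) c u = \sum_u c u.
Proof.
under eq_bigr => u _ do rewrite stepE.
have h (F : 'I_n -> nat) : \sum_u (F u)%:Z = (\sum_u F u)%N%:Z.
  by rewrite -natz natr_sum; apply: eq_bigr => i _; rewrite natz.
rewrite big_split big_split /= sumrN !h sumLG.
by rewrite addrNK.
Qed.

Lemma spread_step n (c : 'I_n -> int) (B : int) :
  (2 * n)%:Z <= B -> (forall u v, c u - c v <= B) ->
  forall u v, diffusion_step (@complete_graph n) c u
              - diffusion_step (@complete_graph n) c v <= B.
Proof.
move=> hB hc u v; rewrite !stepE.
have Ln x : (Lc c x <= n)%N.
  by rewrite /Lc; apply: leq_trans (max_card _) _; rewrite card_ord.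
have Gn x : (Gc c x <= n)%N.
  by rewrite /Gc; apply: leq_trans (max_card _) _; rewrite card_ord.
have := hc u v; have := Ln u; have := Ln v; have := Gn u; have := Gn v.
case: (leP (c v) (c u)) => h.
  have h1 : (Lc c v <= Lc c u)%N.
    apply: subset_leq_card; apply/subsetP => w; rewrite !inE /complete_graph.
    move=> /andP[_ hw]; apply/andP; split; last exact: lt_le_trans hw h.
    apply/eqP => E; move: hw h; rewrite E; lia.
  have h2 : (Gc c u <= Gc c v)%N.
    apply: subset_leq_card; apply/subsetP => w; rewrite !inE /complete_graph.
    move=> /andP[_ hw]; apply/andP; split; last exact: le_lt_trans h hw.
    apply/eqP => E; move: hw h; rewrite E; lia.
  lia.
lia.
Qed.

Lemma abs_bound (N x S A : int) : 1 <= N -> N * x - S <= A -> S - N * x <= A ->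
  `|x| <= `|S| + A.
Proof.
move=> hN h1 h2.
case: (lerP 0 x) => hx.
  rewrite (ger0_norm hx).
  have : x <= N * x by nia.
  have := ler_norm S. lia.
rewrite (ltr0_norm hx).
have : N * x <= x by nia.
have := ler_norm (- S); rewrite normrN. lia.
Qed.

Lemma diffS n (c0 : 'I_n -> int) t :
  diffusion (@complete_graph n) c0 t.+1 =
  diffusion_step (@complete_graph n) (diffusion (@complete_graph n) c0 t).
Proof. by []. Qed.

Lemma bounded n (hn : (1 <= n)%N) (c0 : 'I_n -> int) :
  exists K : int, 0 <= K /\ forall t u, `|diffusion (@complete_graph n) c0 t u| <= K.
Proof.
set c := diffusion (@complete_graph n) c0.
set S := \sum_u c0 u.
set s := \sum_u `|c0 u|.
have hS t : \sum_u c t u = S.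
  elim: t => [//|t IH]; by rewrite /c diffS sum_step.
have habs u : `|c0 u| <= s.
  by rewrite /s (bigD1 u) //= lerDl; apply: sumr_ge0 => i _.
have hs0 : 0 <= s by apply: sumr_ge0.
clearbody s S.
set B : int := (2 * n)%:Z + 2 * s.
have hsp t : forall u v, c t u - c t v <= B.
  elim: t => [|t IH] u v.
    rewrite /c /diffusion /= /B.
    have h1 : c0 u - c0 v <= `|c0 u| + `|c0 v|.
      by apply: lerD; [apply: ler_norm | rewrite -normrN; apply: ler_norm].
    have := habs u; have := habs v. move: h1.
    move: (`|c0 u|) (`|c0 v|) => x y; lia.
  rewrite /c diffS; apply: spread_step => //.
  rewrite /B; lia.
have hB0 : 0 <= B by rewrite /B; lia.
clearbody B.
exists (`|S| + n%:Z * B); split.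
  have := normr_ge0 S; have : 0 <= n%:Z * B by apply: mulr_ge0.
  move: (`|S|) => x; lia.
move=> t u.
apply: (@abs_bound n%:Z); first by lia.
- have : \sum_w (c t u - c t w) <= \sum_(w < n) B by apply: ler_sum => w _; apply: hsp.
  rewrite sumrB (hS t) !sumr_const card_ord -mulr_natr -(mulr_natr B) natz.
  by rewrite (mulrC (c t u)) (mulrC B).
- have : \sum_w (c t w - c t u) <= \sum_(w < n) B by apply: ler_sum => w _; apply: hsp.
  rewrite sumrB (hS t) !sumr_const card_ord -mulr_natr -(mulr_natr B) natz.
  by rewrite (mulrC (c t u)) (mulrC B).
Qed.

From Stdlib Require Import FunctionalExtensionality.

Lemma main_aux (n : nat) (hn : (2 <= n)%N) (c0 : 'I_n -> int) :
  exists (t p : nat), (1 <= p)%N /\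
    diffusion (@complete_graph n) c0 (t + p)%N = diffusion (@complete_graph n) c0 t.
Proof.
have hn1 : (1 <= n)%N by apply: leq_trans hn.
have [K [hK0 hK]] := bounded hn1 c0.
set c := diffusion (@complete_graph n) c0.
set k : nat := `|K|%N.
have hkK : k%:Z = K by rewrite /k gez0_abs.
pose F := {ffun 'I_n -> 'I_(k.*2).+1}.
pose enc (t : nat) : F := [ffun u => inord (absz (c t u + K))].
have encK t u : (nat_of_ord (enc t u) : int) = c t u + K.
  have := hK t u; rewrite -/c ler_norml => /andP [h1 h2].
  rewrite ffunE inordK.
    by rewrite gez0_abs //; lia.
  rewrite ltnS -(@ler_nat int) natz gez0_abs; last by lia.
  rewrite -muln2 natrM natz hkK. lia.
have encI i j : enc i = enc j -> c i = c j.
  move=> E; apply: functional_extensionality => u.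
  have := encK i u; have := encK j u; by rewrite E => -> /addIr ->.
pose h := fun i : 'I_(#|F|.+1) => enc i.
have [i0 [j0 [ij0 hij0]]] : exists i j, i != j /\ h i = h j.
  case: (boolP [exists i, exists j, (i != j) && (h i == h j)]).
    move=> /existsP [x /existsP [y /andP [xy /eqP hxy]]].
    by exists x, y.
  move=> /existsPn hne.
  have inj : injective h.
    move=> x y hxy; apply/eqP; apply/negPn/negP => xy.
    have := hne x; move/existsPn => /(_ y); by rewrite xy hxy eqxx.
  by have := leq_card h inj; rewrite card_ord ltnn.
have E := encI _ _ hij0.
case: (ltngtP i0 j0) => hlt.
- exists i0, (j0 - i0)%N; split; first by rewrite subn_gt0.
  by rewrite subnKC ?(ltnW hlt) // E.
- exists j0, (i0 - j0)%N; split; first by rewrite subn_gt0.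
  by rewrite subnKC ?(ltnW hlt) // E.
- by move: ij0; rewrite -(inj_eq val_inj) /= hlt eqxx.
Qed.

Local Close Scope ring_scope.
Unset Implicit Arguments.
Set Strict Implicit.

Theorem theorem12 (n : nat) (hn : (2 <= n)%N) (c0 : 'I_n -> int) :
  exists (t p : nat), (1 <= p)%N /\
    diffusion (@complete_graph n) c0 (t + p) = diffusion (@complete_graph n) c0 t.
Proof. exact: main_aux. Qed.
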